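(* Let $T_1,T_2,T_3$ be binary trees on $[n]$. For the JC model and for the K2P model: if there is a four-element set $Q\subseteq[n]$ such that $T_3|_Q\notin\{T_1|_Q,T_2|_Q\}$, then $V_{T_3}\not\subseteq V_{T_1}\ast V_{T_2}$.
   Context: Trees are unrooted binary trees with leaves labelled bijectively by $[n]$; $T|_Q$ is the induced subtree on leaf set $Q$; $\Sigma(T)$ is the set of splits of $T$. With $G=\mathbb{Z}_2\times\mathbb{Z}_2$ and $A=(0,0)$, $C=(0,1)$, $G=(1,0)$, $T=(1,1)$, the K3P model on $T$ in Fourier coordinates $q_{g_1\cdots g_n}$ is $q_{g_1\cdots g_n}=\prod_{A|B\in\Sigma(T)}a^{A|B}_{\sum_{i\in A}g_i}$ if $\sum g_i=0$ and $0$ otherwise; K2P imposes $a^e_G=a^e_T$, JC imposes $a^e_C=a^e_G=a^e_T$ for all splits $e$. $V_T\subseteq\mathbb{P}^{4^n-1}$ is the Zariski closure of the image for complex parameters; $V\ast W$ is the join (Zariski closure of the union of all lines meeting $V$ and $W$). *)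

(* Defs.v *)
From mathcomp Require Import all_boot all_algebra.
From mathcomp Require Import Rstruct.
From mathcomp Require Import complex.
From mathcomp Require Import mpoly.

Set Implicit Arguments.
Unset Strict Implicit.
Unset Printing Implicit Defensive.

Import GRing.Theory.
Local Open Scope ring_scope.

Definition CC : numClosedFieldType := (Rdefinitions.R)[i].

Definition grp : zmodType := ('Z_2 * 'Z_2)%type.
Definition gA : grp := (0%R, 0%R).
Definition gC : grp := (0%R, 1%R).
Definition gG : grp := (1%R, 0%R).
Definition gT : grp := (1%R, 1%R).

(* A split A|B of [n] = 'I_n is encoded as the unordered pair {A, B}.  *)
Definition is_split (n : nat) (e : {set {set 'I_n}}) : Prop :=
  exists A : {set 'I_n}, [/\ A != set0, ~: A != set0 & e = [set A; ~: A]].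

Definition compatible (n : nat) (e1 e2 : {set {set 'I_n}}) : bool :=
  [exists A1 in e1, exists A2 in e2, A1 :&: A2 == set0].

(* Unrooted binary (phylogenetic) trees with leaves bijectively labelled by
   [n], identified with their split systems: by Buneman's theorem these are
   exactly the pairwise compatible split systems with 2n-3 splits. *)
Definition binary_tree (n : nat) (T : {set {set {set 'I_n}}}) : Prop :=
  [/\ (forall e, e \in T -> is_split e),
      {in T &, forall e1 e2, compatible e1 e2}
    & #|T| = (2 * n - 3)%N].

Definition sides (n : nat) (T : {set {set {set 'I_n}}}) : {set {set 'I_n}} :=
  \bigcup_(e in T) e.

(* The induced subtree T|_Q, as its split system on Q: the restrictions
   (A cap Q) | (Q \ A) of the splits of T that stay nontrivial on Q. *)
Definition tree_restrict (n : nat) (T : {set {set {set 'I_n}}}) (Q : {set 'I_n})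
  : {set {set {set 'I_n}}} :=
  [set [set A :&: Q; Q :\: A] | A in sides T
                              & (A :&: Q != set0) && (Q :\: A != set0)].

Definition labelling (n : nat) := {ffun 'I_n -> grp}.

Definition ncoord (n : nat) : nat := #|{: labelling n}|.

(* A vector of C^(4^n), coordinates q_{g_1...g_n}; coordinate of g is
   q (enum_rank g). *)
Definition vec (n : nat) := 'I_(ncoord n) -> CC.
Definition coord (n : nat) (q : vec n) (g : labelling n) : CC := q (enum_rank g).

Definition nonzero (n : nat) (q : vec n) : Prop := exists i, q i != 0.

Definition side (n : nat) (e : {set {set 'I_n}}) : {set 'I_n} :=
  odflt set0 [pick A in e].

(* sum_{i in A} g_i for the split e = A|B (well defined when sum g_i = 0) *)
Definition split_elt (n : nat) (e : {set {set 'I_n}}) (g : labelling n) : grp :=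
  \sum_(i in side e) g i.

Definition params (n : nat) := {set {set 'I_n}} -> grp -> CC.

Definition fourier_param (n : nat) (T : {set {set {set 'I_n}}}) (a : params n)
  (g : labelling n) : CC :=
  if \sum_i g i == 0 then \prod_(e in T) a e (split_elt e g) else 0.

Inductive model := JC | K2P.

Definition model_constraint (m : model) (n : nat) (a : params n) : Prop :=
  match m with
  | K2P => forall e, a e gG = a e gT
  | JC => forall e, a e gC = a e gG /\ a e gG = a e gT
  end.

(* Image of the parametrisation (nonzero points, seen projectively). *)
Definition model_image (m : model) (n : nat) (T : {set {set {set 'I_n}}})
  : vec n -> Prop :=
  fun q => nonzero q /\ exists a : params n,
      model_constraint m a /\ forall g, coord q g = fourier_param T a g.

(* Projective geometry in P^(4^n - 1): a subset of projective space is *)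
(* represented by the set of nonzero vectors of C^(4^n) lying over it. *)

Definition zariski_closure (n : nat) (S : vec n -> Prop) : vec n -> Prop :=
  fun z => nonzero z /\
    forall (d : nat) (p : {mpoly CC[ncoord n]}), p \is d.-homog ->
      (forall s, S s -> p.@[s] = 0) -> p.@[z] = 0.

Definition model_variety (m : model) (n : nat) (T : {set {set {set 'I_n}}})
  : vec n -> Prop := zariski_closure (model_image m T).

Definition join (n : nat) (V W : vec n -> Prop) : vec n -> Prop :=
  zariski_closure (fun z => nonzero z /\
    exists (x y : vec n) (alpha beta : CC),
      [/\ V x, W y & forall i, z i = alpha * x i + beta * y i]).

(* Main.v *)
Require Import Defs.
From mathcomp Require Import all_boot all_algebra.
From mathcomp Require Import Rstruct.
From mathcomp Require Import complex.
From mathcomp Require Import mpoly.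
From mathcomp Require Import zify ring.
Set Implicit Arguments. Unset Strict Implicit. Unset Printing Implicit Defensive.


Module M1.

Section Comb.
Variable I : finType.
Implicit Types (X Y Z A B C : {set I}) (e : {set {set I}}) (F : {set {set {set I}}}).

Definition restr Y e : {set {set I}} := [set B :&: Y | B in e].
Definition Rf Y F : {set {set {set I}}} := [set restr Y e | e in F & set0 \notin restr Y e].
Definition splitof X e := exists A, [/\ A \subset X, A != set0, X :\: A != set0 & e = [set A; X :\: A]].
Definition compat e1 e2 : bool := [exists A1 in e1, exists A2 in e2, A1 :&: A2 == set0].
Definition good X F := (forall e, e \in F -> splitof X e) /\ {in F &, forall e1 e2, compat e1 e2}.

Lemma restr2 Y A B : restr Y [set A; B] = [set A :&: Y; B :&: Y].
Proof. by rewrite /restr imsetU1 imset_set1. Qed.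

Lemma restr_split X Y e : Y \subset X -> splitof X e -> set0 \notin restr Y e ->
  splitof Y (restr Y e).
Proof.
move=> sYX [A [sAX A0 XA0 ->]]; rewrite restr2 => H.
exists (A :&: Y); split.
- exact: subsetIr.
- by apply: contra H => /eqP <-; rewrite !inE eqxx.
- apply: contra H => /eqP H; rewrite !inE; apply/orP; right; apply/eqP.
  by rewrite -H; apply/setP=> i; rewrite !inE; case: (i \in Y) (i \in A) (i \in X) (subsetP sYX i) => [] [] [] //= ->.
- congr [set _; _]; apply/setP=> i; rewrite !inE.
  by case: (i \in Y) (i \in A) (i \in X) (subsetP sYX i) => [] [] [] // ->.
Qed.

Lemma restr_compat Y e1 e2 : compat e1 e2 -> compat (restr Y e1) (restr Y e2).
Proof.
case/exists_inP=> A1 HA1 /exists_inP [A2 HA2 /eqP H].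
apply/exists_inP; exists (A1 :&: Y); first exact: imset_f.
apply/exists_inP; exists (A2 :&: Y); first exact: imset_f.
by rewrite setIACA H set0I.
Qed.

Lemma Rf_good X Y F : Y \subset X -> good X F -> good Y (Rf Y F).
Proof.
move=> sYX [Hs Hc]; split.
- move=> e /imsetP [e0]; rewrite inE => /andP [He0 H0] ->.
  exact: restr_split sYX (Hs _ He0) H0.
- move=> e1 e2 /imsetP [f1]; rewrite inE => /andP [Hf1 _] -> /imsetP [f2]; rewrite inE => /andP [Hf2 _] ->.
  exact/restr_compat/Hc.
Qed.

Lemma restr_comp Y Z e : Y \subset Z -> restr Y (restr Z e) = restr Y e.
Proof.
move=> sYZ; rewrite /restr -imset_comp; apply: eq_imset => B /=.
by rewrite -setIA (setIidPr sYZ).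
Qed.

Lemma Rf_comp Y Z F : Y \subset Z -> Rf Y (Rf Z F) = Rf Y F.
Proof.
move=> sYZ; apply/setP=> e; apply/imsetP/imsetP.
- case=> e1; rewrite inE => /andP [/imsetP [e2]]; rewrite inE => /andP [He2 _] -> H ->.
  exists e2; last by rewrite restr_comp.
  by rewrite inE He2 -(restr_comp e2 sYZ).
- case=> e1; rewrite inE => /andP [He1 H] ->.
  exists (restr Z e1); last by rewrite restr_comp.
  rewrite inE restr_comp // H andbT; apply/imsetP; exists e1 => //.
  rewrite inE He1 /=; apply: contra H => /imsetP [B HB HB0].
  apply/imsetP; exists B => //; apply/setP=> i; rewrite !inE.
  apply/esym/negbTE/negP => /andP [iB iY]; move/setP: HB0 => /(_ i); rewrite !inE iB (subsetP sYZ i iY) //.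
Qed.

End Comb.

End M1.
Import M1.

Module M2.

Section K.
Variable I : finType.
Implicit Types (X Y Z A B C : {set I}).

Ltac elt i B C B' C' :=
  repeat match goal with H : _ =i _ |- _ => move: (H i); clear H end;
  rewrite ?inE; case: (i \in B); case: (i \in C); case: (i \in B'); case: (i \in C'); by [].

Lemma core B C B' C' :
  B :|: C = B' :|: C' -> B :&: C = set0 -> B' :&: C' = set0 ->
  B != set0 -> C != set0 -> B' != set0 -> C' != set0 ->
  2 <= (B :&: B' == set0) + (B :&: C' == set0) + (C :&: B' == set0) + (C :&: C' == set0) ->
  (B = B' /\ C = C') \/ (B = C' /\ C = B').
Proof.
move=> /setP U /setP D1 /setP D2 /set0Pn [b Hb] /set0Pn [c Hc] /set0Pn [b' Hb'] /set0Pn [c' Hc'].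
case E1: (B :&: B' == set0); case E2: (B :&: C' == set0);
case E3: (C :&: B' == set0); case E4: (C :&: C' == set0) => //= _;
repeat match goal with E : (_ == set0) = true |- _ => move/eqP/setP in E end;
repeat match goal with E : (_ == set0) = false |- _ => clear E end.
all: first
  [ left; split; apply/setP => i; elt i B C B' C'
  | right; split; apply/setP => i; elt i B C B' C'
  | exfalso; move: Hb; elt b B C B' C'
  | exfalso; move: Hc; elt c B C B' C'
  | exfalso; move: Hb'; elt b' B C B' C'
  | exfalso; move: Hc'; elt c' B C B' C' ].
Qed.
End K.

End M2.
Import M2.

Module M3.


Lemma card_almost_inj (aT rT : finType) (f : aT -> rT) (D : {set aT}) :
  (forall u v u' v', u \in D -> v \in D -> u' \in D -> v' \in D -> u != v -> f u = f v ->
     u' != v' -> f u' = f v' -> u' = u \/ u' = v) ->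
  #|D| <= #|f @: D| + 1.
Proof.
move=> K.
case: (boolP [exists u in D, exists v in D, (u != v) && (f u == f v)]).
- case/exists_inP=> u uD /exists_inP [v vD /andP [nuv /eqP fuv]].
  rewrite (cardsD1 u D) uD add1n addnC ltnS.
  rewrite -(card_in_imset (f := f) (D := mem (D :\ u))).
    by apply/subset_leq_card/imsetS/subsetDl.
  move=> u' v'; rewrite !inE => /andP [nu' u'D] /andP [nv' v'D] fe.
  apply/eqP; apply: contraT => nuv'.
  have [h1|h1] := K u v u' v' uD vD u'D v'D nuv fuv nuv' fe; first by rewrite h1 eqxx in nu'.
  have nvu : v' != u' by rewrite eq_sym.
  have [h2|h2] := K u v v' u' uD vD v'D u'D nuv fuv nvu (esym fe); first by rewrite h2 eqxx in nv'.
  by rewrite h1 h2 eqxx in nuv'.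
- move/exists_inPn=> H.
  rewrite card_in_imset ?leq_addr //.
  move=> u v uD vD fe; apply/eqP; apply: contraT => nuv.
  by move: (H u uD) => /exists_inPn /(_ v vD); rewrite nuv fe eqxx.
Qed.

End M3.
Import M3.

Module M4.

Section Step.
Variable I : finType.
Implicit Types (X Y Z A B C : {set I}) (e u v : {set {set I}}) (F : {set {set {set I}}}).

Lemma set2_eq (T : finType) (a b c d : T) :
  [set a; b] = [set c; d] -> (a = c /\ b = d) \/ (a = d /\ b = c).
Proof.
move=> H.
have ha : a \in [set c; d] by rewrite -H set21.
have hb : b \in [set c; d] by rewrite -H set22.
have hc : c \in [set a; b] by rewrite H set21.
have hd : d \in [set a; b] by rewrite H set22.
move: ha hb hc hd; rewrite !inE.
case/orP=> /eqP ->; case/orP=> /eqP ->; case/orP=> /eqP hc; case/orP=> /eqP hd; by auto.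
Qed.

Lemma xside X x u : x \in X -> splitof X u ->
  exists A, [/\ x \in A, A \subset X & u = [set A; X :\: A]].
Proof.
move=> xX [A [sAX _ _ ->]].
case: (boolP (x \in A)) => xA; first by exists A.
exists (X :\: A); split.
- by rewrite inE xA.
- exact: subsetDl.
- by rewrite setDDr setDv set0U (setIidPr sAX) setUC.
Qed.

Lemma restr_x X x A : x \in A -> A \subset X ->
  restr (X :\ x) [set A; X :\: A] = [set A :\ x; X :\: A].
Proof.
move=> xA sAX; rewrite restr2; congr [set _; _]; apply/setP=> i; rewrite !inE.
- by case: (i == x) (i \in A) (i \in X) (subsetP sAX i) => [] [] [] // ->.
- case: (boolP (i == x)) => [/eqP ->|] //=; first by rewrite xA.
  by case: (i \in X); rewrite ?andbF ?andbT.
Qed.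

Lemma collide X x u v : x \in X -> splitof X u -> splitof X v -> u != v ->
  restr (X :\ x) u = restr (X :\ x) v -> set0 \notin restr (X :\ x) u ->
  exists B C, [/\ x \notin B, x \notin C, B != set0, C != set0 &
     [/\ B :&: C = set0, B :|: C = X :\ x, u = [set x |: B; C] & v = [set x |: C; B]]].
Proof.
move=> xX su sv nuv.
have [A [xA sAX eu]] := xside xX su.
have [A' [xA' sA'X ev]] := xside xX sv.
subst u v.
rewrite !restr_x // => /set2_eq [[h1 h2]|[h1 h2]] H0.
  have eA : A = A'.
    apply/setP=> i; move/setP: h1 => /(_ i); rewrite !inE.
    by case: (boolP (i == x)) => [/eqP ->|] //=; rewrite xA xA'.
  by rewrite eA eqxx in nuv.
exists (A :\ x), (X :\: A); split.
- by rewrite setD11.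
- by rewrite inE xA.
- by apply: contra H0 => /eqP <-; rewrite set21.
- by apply: contra H0 => /eqP <-; rewrite set22.
split.
- apply/setP=> i; rewrite !inE; by case: (i \in A); rewrite ?andbF.
- apply/setP=> i; rewrite !inE.
  case: (boolP (i == x)) => [/eqP ->|_] /=; first by rewrite xA.
  by case: (i \in A) (i \in X) (subsetP sAX i) => [] [] // ->.
- congr [set _; _]; apply/setP=> i; rewrite !inE.
  by case: (boolP (i == x)) => [/eqP ->|] //=; rewrite xA.
- rewrite h2 h1; congr [set _; _]; apply/setP=> i; rewrite !inE.
  by case: (boolP (i == x)) => [/eqP ->|] //=; rewrite xA'.
Qed.

Lemma compat_form x B C B' C' : x \notin C -> x \notin C' ->
  compat [set x |: B; C] [set x |: B'; C'] ->
  (B :&: C' == set0) || (C :&: B' == set0) || (C :&: C' == set0).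
Proof.
move=> xC xC' /exists_inP [A1 HA1 /exists_inP [A2 HA2 /eqP H]].
move: HA1 HA2; rewrite !inE => /orP [] /eqP E1 /orP [] /eqP E2; subst A1 A2.
- by move/setP: H => /(_ x); rewrite !inE eqxx.
- apply/orP; left; apply/orP; left; apply/eqP/setP=> i; move/setP: H => /(_ i); rewrite !inE.
  by case: (i \in B) (i \in C') => [] [] //; rewrite orbT.
- apply/orP; left; apply/orP; right; apply/eqP/setP=> i; move/setP: H => /(_ i); rewrite !inE.
  by case: (i \in B') (i \in C) => [] [] //; rewrite orbT.
- by rewrite H eqxx !orbT.
Qed.

End Step.

End M4.
Import M4.

Module M5.

Section Step2.
Variable I : finType.
Implicit Types (X Y Z A B C : {set I}) (e u v : {set {set I}}) (F : {set {set {set I}}}).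

Lemma single_side X x B : B \subset X -> B != set0 -> B :&: (X :\ x) = set0 -> B = [set x].
Proof.
move=> sBX /set0Pn [b bB] H.
apply/setP=> i; rewrite inE; apply/idP/idP.
- move=> iB; move/setP: H => /(_ i); rewrite !inE iB (subsetP sBX i iB) andbT.
  by case: (i == x).
- move/eqP=> ->; move/setP: H => /(_ b); rewrite !inE bB (subsetP sBX b bB) andbT.
  by case: (boolP (b == x)) => [/eqP <-|].
Qed.

Lemma step X x F : x \in X -> good X F -> #|F| <= #|Rf (X :\ x) F| + 2.
Proof.
move=> xX [Hs Hc].
set Y := X :\ x.
set P := [set e | set0 \in restr Y e].
rewrite -(cardsID P F).
have h0 : #|F :&: P| <= 1.
  rewrite -(cards1 [set [set x]; Y]); apply: subset_leq_card; apply/subsetP=> e.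
  rewrite !inE => /andP [eF]; have [A [sAX A0 XA0 ee]] := Hs e eF; subst e.
  rewrite restr2 !inE => /orP [] /eqP /esym H.
  - have eA := single_side sAX A0 H; subst A; done.
  - have eA := single_side (subsetDl X A) XA0 H.
    have eAY : A = Y.
      apply/setP=> i; move/setP: eA => /(_ i); rewrite !inE.
      case: (boolP (i \in A)) => iA; [rewrite (subsetP sAX i iA) | ]; case: (i == x); case: (i \in X); by [].
    by rewrite eA eAY setUC.
have e1 : Rf Y F = restr Y @: (F :\: P).
  apply/setP=> e; apply/imsetP/imsetP; case=> e0 H ->; exists e0 => //; move: H; by rewrite !inE andbC.
have h1 : #|F :\: P| <= #|Rf Y F| + 1.
  rewrite e1; apply: card_almost_inj.
  move=> u v u' v'; rewrite !inE => /andP [nu uF] /andP [nv vF] /andP [nu' u'F] /andP [nv' v'F] nuv fuv nuv' fuv'.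
  have [B [C [xB xC B0 C0 [BC BCY eu ev]]]] := collide xX (Hs _ uF) (Hs _ vF) nuv fuv nu.
  have [B' [C' [xB' xC' B0' C0' [BC' BCY' eu' ev']]]] := collide xX (Hs _ u'F) (Hs _ v'F) nuv' fuv' nu'.
  have := Hc _ _ uF u'F; rewrite eu eu' => /(compat_form xC xC') c1.
  have := Hc _ _ uF v'F; rewrite eu ev' => /(compat_form xC xB') c2.
  have := Hc _ _ vF u'F; rewrite ev eu' => /(compat_form xB xC') c3.
  have := Hc _ _ vF v'F; rewrite ev ev' => /(compat_form xB xB') c4.
  have hc : 2 <= (B :&: B' == set0) + (B :&: C' == set0) + (C :&: B' == set0) + (C :&: C' == set0).
    move: c1 c2 c3 c4.
    by case: (B :&: B' == set0); case: (B :&: C' == set0); case: (C :&: B' == set0); case: (C :&: C' == set0).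
  have [[eB eC]|[eB eC]] := core (etrans BCY (esym BCY')) BC BC' B0 C0 B0' C0' hc.
  - by left; rewrite eB eC.
  - by right; rewrite eB eC.
move: h0 h1; rewrite -/Y => a b; apply: (leq_trans (leq_add a b)); by rewrite add1n addn1 addn2.
Qed.

Lemma Rf_self X F : good X F -> Rf X F = F.
Proof.
move=> [Hs _].
have hr : forall e, e \in F -> restr X e = e /\ set0 \notin restr X e.
  move=> e eF; have [A [sAX A0 XA0 ->]] := Hs e eF.
  rewrite restr2 (setIidPl sAX) (setIidPl (subsetDl X A)); split => //.
  by rewrite !inE negb_or eq_sym A0 eq_sym XA0.
apply/setP=> e; apply/imsetP/idP.
- by case=> e0; rewrite inE => /andP [e0F _] ->; have [-> _] := hr _ e0F.
- move=> eF; exists e; last by have [-> _] := hr _ eF.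
  by rewrite inE eF; have [_ ->] := hr _ eF.
Qed.

Lemma iter Y : forall k X F, Y \subset X -> #|X :\: Y| = k -> good X F -> #|F| <= #|Rf Y F| + 2 * k.
Proof.
elim=> [|k IH] X F sYX hk gF.
  have eXY : X = Y.
    apply/eqP; rewrite eqEsubset sYX andbT; apply/subsetP=> i iX.
    apply: contraT => iY; move/eqP: hk; rewrite cards_eq0 => /eqP/setP /(_ i).
    by rewrite !inE iY iX.
  by subst X; rewrite muln0 addn0 Rf_self.
have [x xXY] : exists x, x \in X :\: Y.
  by apply/set0Pn; rewrite -cards_eq0 hk.
have xX : x \in X by move: xXY; rewrite inE => /andP [].
have xY : x \notin Y by move: xXY; rewrite inE => /andP [].
have sYX' : Y \subset X :\ x.
  apply/subsetP=> i iY; rewrite !inE (subsetP sYX i iY) andbT.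
  by apply: contraNneq xY => <-.
have hk' : #|(X :\ x) :\: Y| = k.
  have : #|X :\: Y| = (x \in X :\: Y) + #|(X :\: Y) :\ x| by apply: cardsD1.
  rewrite hk xXY add1n => [[->]]; apply: eq_card => i; rewrite !inE.
  by case: (i == x); case: (i \in Y); case: (i \in X).
have := IH _ _ sYX' hk' (Rf_good (subsetDl X [set x]) gF).
rewrite Rf_comp // => h.
have := step xX gF.
move: h; set a := #|Rf (X :\ x) F|; set b := #|Rf Y F| => h1 h2.
apply: (leq_trans h2); rewrite mulnS (addnC 2 (2 * k)) addnA leq_add2r; exact: h1.
Qed.
End Step2.

End M5.
Import M5.

Module M6.

Section Quartet.
Variable I : finType.
Implicit Types (X Y Z A B C Q W S : {set I}) (e u v : {set {set I}}) (F : {set {set {set I}}}).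

Definition Triv Q : {set {set {set I}}} := [set [set [set q]; Q :\ q] | q in Q].

Lemma cardQD Q A : A \subset Q -> #|Q :\: A| = #|Q| - #|A|.
Proof. by move=> sAQ; rewrite cardsD (setIidPr sAQ). Qed.

Lemma split_any Q e A0 : splitof Q e -> A0 \in e -> e = [set A0; Q :\: A0] /\ A0 \subset Q.
Proof.
move=> [A [sAQ A0' QA0 ->]]; rewrite !inE => /orP [] /eqP ->; split => //.
- by rewrite setDDr setDv set0U (setIidPr sAQ) setUC.
- exact: subsetDl.
Qed.

Lemma comp_pair Q S (S' : {set I}) : #|Q| = 4 -> S \subset Q -> S' \subset Q -> #|S| = 2 -> #|S'| = 2 ->
  S :&: S' = set0 -> S' = Q :\: S.
Proof.
move=> hQ sSQ sS'Q hS hS' hI; apply/eqP; rewrite eqEcard cardQD // hQ hS hS' leqnn andbT.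
apply/subsetP=> i iS'; rewrite inE (subsetP sS'Q i iS') andbT.
by apply/negP => iS; move/setP: hI => /(_ i); rewrite !inE iS iS'.
Qed.

Lemma card_in2 Q A S : #|Q| = 4 -> A \subset Q -> #|A| = 2 -> S \in [set A; Q :\: A] -> #|S| = 2.
Proof. by move=> hQ sAQ hA; rewrite !inE => /orP [] /eqP ->; rewrite ?cardQD // hQ hA. Qed.

Lemma pair_unique Q F e e' : #|Q| = 4 -> good Q F -> e \in F -> e' \in F ->
  [exists A in e, #|A| == 2] -> [exists A in e', #|A| == 2] -> e = e'.
Proof.
move=> hQ [Hs Hc] eF e'F /exists_inP [A Ae /eqP hA] /exists_inP [A' A'e /eqP hA'].
have [ee sAQ] := split_any (Hs _ eF) Ae.
have [ee' sA'Q] := split_any (Hs _ e'F) A'e.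
have /exists_inP [S Se /exists_inP [S' S'e /eqP hI]] := Hc _ _ eF e'F.
have hS : #|S| = 2 by apply: (card_in2 hQ sAQ hA); rewrite -ee.
have hS' : #|S'| = 2 by apply: (card_in2 hQ sA'Q hA'); rewrite -ee'.
have [eS sSQ] := split_any (Hs _ eF) Se.
have [eS' sS'Q] := split_any (Hs _ e'F) S'e.
have eq := comp_pair hQ sSQ sS'Q hS hS' hI.
by rewrite eS eS' eq setDDr setDv set0U (setIidPr sSQ) setUC.
Qed.

Lemma quartet Q F : #|Q| = 4 -> good Q F -> 5 <= #|F| ->
  exists W, [/\ W \subset Q, #|W| = 2 & F = Triv Q :|: [set [set W; Q :\: W]]].
Proof.
move=> hQ [Hs Hc] h5.
set F2 := [set e in F | [exists A in e, #|A| == 2]].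
have hT : #|Triv Q| <= 4 by rewrite -hQ; apply: leq_imset_card.
have sub1 : F :\: F2 \subset Triv Q.
  apply/subsetP=> e; rewrite !inE => /andP [n2 eF].
  have [A [sAQ A0 QA0 ee]] := Hs e eF.
  have hA : #|A| != 2 by apply: contra n2 => h; rewrite eF /=; apply/exists_inP; exists A => //; rewrite ee set21.
  have hA0 : 0 < #|A| by rewrite card_gt0.
  have hA4 : #|A| < 4.
    have : 0 < #|Q :\: A| by rewrite card_gt0.
    by rewrite cardQD // hQ subn_gt0.
  have [h1|h3] : #|A| = 1 \/ #|A| = 3 by move: hA hA0 hA4; lia.
  - move/eqP: h1 => /cards1P [q eAq].
    have qQ : q \in Q by apply: (subsetP sAQ); rewrite eAq set11.
    by apply/imsetP; exists q => //; rewrite ee eAq.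
  - have : #|Q :\: A| == 1 by rewrite cardQD // hQ h3.
    move/cards1P=> [q eq].
    have qQ : q \in Q by move/setP: eq => /(_ q); rewrite !inE eqxx => /andP [].
    have eA : A = Q :\ q by rewrite -eq setDDr setDv set0U (setIidPr sAQ).
    by apply/imsetP; exists q => //; rewrite ee eq eA setUC.
have F2le : #|F2| <= 1.
  case: (set_0Vmem F2) => [->|[e0 e0F2]]; first by rewrite cards0.
  rewrite -(cards1 e0); apply: subset_leq_card; apply/subsetP => e eF2; rewrite inE; apply/eqP.
  move: eF2 e0F2; rewrite !inE => /andP [eF h] /andP [e0F h0].
  exact: (pair_unique hQ (conj Hs Hc) eF e0F h h0).
have sF2 : F2 \subset F by apply/subsetP=> e; rewrite inE => /andP [].
have hD : #|F :\: F2| <= 4 by apply: leq_trans hT; apply: subset_leq_card.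
move: h5; rewrite -(cardsID F2 F) (setIidPr sF2) => h5.
have h1 : #|F2| = 1 by move: F2le hD h5; lia.
have h4 : #|F :\: F2| = 4 by move: F2le hD h5; lia.
have eT : F :\: F2 = Triv Q by apply/eqP; rewrite eqEcard sub1 h4.
move/eqP: h1 => /cards1P [e0 e0F].
have : e0 \in F2 by rewrite e0F set11.
rewrite inE => /andP [e0inF /exists_inP [A Ae /eqP hA]].
have [ee sAQ] := split_any (Hs _ e0inF) Ae.
exists A; split => //.
by rewrite -{1}(setID F F2) (setIidPr sF2) eT e0F ee setUC.
Qed.
End Quartet.

End M6.
Import M6.

Module M7.

Lemma is_split_any n (e : {set {set 'I_n}}) A : is_split e -> A \in e -> e = [set A; ~: A].
Proof.
move=> [A0 [_ _ ->]]; rewrite !inE => /orP [] /eqP -> //.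
by rewrite setCK setUC.
Qed.

Lemma good_tree n (T : {set {set {set 'I_n}}}) : binary_tree T -> good setT T.
Proof.
move=> [Hs Hc _]; split => // e eT.
have [A [A0 CA0 ->]] := Hs e eT.
by exists A; rewrite setTD; split.
Qed.

Lemma tree_restrict_Rf n (T : {set {set {set 'I_n}}}) (Q : {set 'I_n}) : binary_tree T -> tree_restrict T Q = Rf Q T.
Proof.
move=> [Hs _ _].
have eQ : forall A : {set 'I_n}, ~: A :&: Q = Q :\: A by move=> A; rewrite setDE setIC.
apply/setP=> s; apply/imsetP/imsetP.
- case=> A; rewrite inE => /andP [/bigcupP [e eT Ae] /andP [h1 h2]] ->.
  exists e; last by rewrite (is_split_any (Hs e eT) Ae) restr2 eQ.
  rewrite inE eT /= (is_split_any (Hs e eT) Ae) restr2 eQ !inE negb_or.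
  by rewrite eq_sym h1 eq_sym h2.
- case=> e; rewrite inE => /andP [eT h] ->.
  have [A [_ _ ee]] := Hs e eT.
  have Ae : A \in e by rewrite ee set21.
  exists A; last by rewrite ee restr2 eQ.
  rewrite inE; apply/andP; split; first by apply/bigcupP; exists e.
  move: h; rewrite ee restr2 eQ !inE negb_or.
  by rewrite eq_sym => /andP [-> ]; rewrite eq_sym.
Qed.

Lemma tree_quartet n (T : {set {set {set 'I_n}}}) (Q : {set 'I_n}) : binary_tree T -> #|Q| = 4 ->
  exists W : {set 'I_n}, [/\ W \subset Q, #|W| = 2 & tree_restrict T Q = Triv Q :|: [set [set W; Q :\: W]]].
Proof.
move=> bT hQ.
have gT := good_tree bT.
have h := iter (subsetT Q) (erefl _) gT.
have hc : #|[set: 'I_n] :\: Q| = n - 4.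
  by rewrite setTD cardsCs setCK card_ord hQ.
have hn : 4 <= n by rewrite -hQ; apply: (leq_trans (max_card _)); rewrite card_ord.
case: bT => [Hs Hc hT].
rewrite tree_restrict_Rf //; apply: quartet => //.
- exact: Rf_good (subsetT Q) gT.
- move: h; rewrite hc hT; lia.
Qed.

End M7.
Import M7.

Module M8.
Import GRing.Theory Num.Theory.
Local Open Scope ring_scope.

Lemma fst_sum (I : finType) (P : pred I) (F : I -> grp) : (\sum_(i | P i) F i).1 = \sum_(i | P i) (F i).1.
Proof. by apply: (big_morph fst) => //. Qed.
Lemma snd_sum (I : finType) (P : pred I) (F : I -> grp) : (\sum_(i | P i) F i).2 = \sum_(i | P i) (F i).2.
Proof. by apply: (big_morph snd) => //. Qed.
Lemma Z2_nat (k : nat) : (k%:R : 'Z_2) = (odd k)%:R.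
Proof.
elim: k => [//|k IH]; rewrite mulrS IH /=; case: (odd k) => /=.
  by apply/eqP; rewrite -val_eqE /=.
by rewrite addr0.
Qed.

Definition lab n (Q S : {set 'I_n}) : labelling n :=
  [ffun i => if i \in Q then (if i \in S then gT else gG) else gA].

Lemma sum_ind n (A B : {set 'I_n}) : \sum_(i in A) (if i \in B then 1 else 0 : 'Z_2) = (#|A :&: B|)%:R.
Proof.
rewrite -big_mkcondr /= -sumr_const; apply: eq_bigl => i; by rewrite inE.
Qed.

Lemma lab_sum n (Q S A : {set 'I_n}) :
  \sum_(i in A) lab Q S i = ((#|A :&: Q|)%:R, (#|A :&: Q :&: S|)%:R).
Proof.
rewrite [LHS]surjective_pairing fst_sum snd_sum; congr pair.
- rewrite -sum_ind; apply: eq_big => // i _; rewrite ffunE.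
  by case: (i \in Q); case: (i \in S).
- rewrite -setIA -sum_ind; apply: eq_big => // i _; rewrite ffunE !inE.
  by case: (i \in Q); case: (i \in S).
Qed.

End M8.
Import M8.

Module M9.
Import GRing.Theory Num.Theory.

Section Pairs.
Variable n : nat.
Implicit Types (Q W X Y S : {set 'I_n}).

Lemma card_inter_le X Y : #|X :&: Y| <= #|X|.
Proof. by apply: subset_leq_card; apply: subsetIl. Qed.

Lemma pair_meet Q X Y : #|Q| = 4 -> X \subset Q -> Y \subset Q -> #|X| = 2 -> #|Y| = 2 ->
  Y \notin [set X; Q :\: X] -> #|X :&: Y| = 1.
Proof.
move=> hQ sXQ sYQ hX hY hn.
have := card_inter_le X Y; rewrite hX => hle.
have [h0|[h1|h2]] : #|X :&: Y| = 0 \/ #|X :&: Y| = 1 \/ #|X :&: Y| = 2 by lia.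
- move/eqP: h0; rewrite cards_eq0 => /eqP h0.
  by rewrite (comp_pair hQ sXQ sYQ hX hY h0) set22 in hn.
- by [].
- have e1 : X :&: Y = X by apply/eqP; rewrite eqEcard subsetIl h2 hX.
  have e2 : X :&: Y = Y by apply/eqP; rewrite eqEcard subsetIr h2 hY.
  by rewrite -e2 e1 set21 in hn.
Qed.

Lemma sigma_eq Q W X : W \subset Q -> X \in [set W; Q :\: W] -> [set X; Q :\: X] = [set W; Q :\: W].
Proof.
move=> sWQ; rewrite !inE => /orP [] /eqP -> //.
by rewrite setDDr setDv set0U (setIidPr sWQ) setUC.
Qed.

Lemma sigma_even Q W X S : #|Q| = 4 -> W \subset Q -> #|W| = 2 ->
  X \in [set W; Q :\: W] -> S \in [set W; Q :\: W] -> ~~ odd #|X :&: S|.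
Proof.
move=> hQ sWQ hW.
have hWc : #|Q :\: W| = 2 by rewrite cardQD // hQ hW.
have d1 : W :&: (Q :\: W) = set0 by apply/setP=> i; rewrite !inE; case: (i \in W); rewrite ?andbF.
have d2 : (Q :\: W) :&: W = set0 by rewrite setIC.
rewrite !inE => /orP [] /eqP -> /orP [] /eqP ->;
 by rewrite ?setIid ?hW ?hWc ?d1 ?d2 ?cards0.
Qed.
End Pairs.

End M9.
Import M9.

Module M10.
Import GRing.Theory Num.Theory.
Local Open Scope ring_scope.

Lemma Z2_card (T : finType) (A : {set T}) : ((#|A|)%:R : 'Z_2) = (odd #|A|)%:R.
Proof. exact: Z2_nat. Qed.

Section Edge.
Variable n : nat.
Implicit Types (Q W X Y S : {set 'I_n}).

Definition Fe (a : params n) Q (e : {set {set 'I_n}}) (b : bool) : CC :=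
  if odd #|side e :&: Q| then a e gG
  else if b || (#|side e :&: Q| != 2%N) then a e gA else a e gC.

Definition Sdom Q S := (S \subset Q) && ((S == set0) || (#|S| == 2%N)).

Lemma edge_val (a : params n) Q W S (e : {set {set 'I_n}}) :
  a e gG = a e gT -> #|Q| = 4%N -> W \subset Q -> #|W| = 2%N -> Sdom Q S ->
  (#|side e :&: Q| = 2%N -> side e :&: Q \in [set W; Q :\: W]) ->
  a e (split_elt e (lab Q S)) = Fe a Q e ((S == set0) || (S \in [set W; Q :\: W])).
Proof.
move=> hGT hQ sWQ hW /andP [sSQ hS] hWe.
rewrite /split_elt lab_sum !Z2_card /Fe.
set We := side e :&: Q.
have sWeQ : We \subset Q by apply: subsetIr.
case: (boolP (odd #|We|)) => ho /=.
  by case: (odd #|We :&: S|) => //=.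
have hS' : S = set0 \/ #|S| = 2%N by case/orP: hS => /eqP h; [left|right].
have hk : (#|We| <= 4)%N by rewrite -hQ; apply: subset_leq_card.
case: (#|We| =P 2%N) => [h2|hn2]; last first.
  rewrite orbT.
  have [h0|h4] : #|We| = 0%N \/ #|We| = 4%N by move: ho hk hn2; case: #|We| => [|[|[|[|[|k]]]]] //= _ _ _; auto.
  - move/eqP: h0; rewrite cards_eq0 => /eqP ->; by rewrite set0I cards0.
  - have -> : We = Q by apply/eqP; rewrite eqEcard sWeQ hQ h4.
    rewrite (setIidPr sSQ); case: hS' => [->|->]; by rewrite ?cards0.
have hWeW := hWe h2.
case: (boolP (S == set0)) => [/eqP ->|nS0] /=.
  by rewrite setI0 cards0.
case: (boolP (S \in [set W; Q :\: W])) => hSW /=.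
  by rewrite (negbTE (sigma_even hQ sWQ hW hWeW hSW)).
have hS2 : #|S| = 2%N by case: hS' => // h; rewrite h eqxx in nS0.
have hSn : S \notin [set We; Q :\: We] by rewrite (sigma_eq sWQ hWeW).
by rewrite (pair_meet hQ sWeQ sSQ h2 hS2 hSn).
Qed.
End Edge.

End M10.
Import M10.

Module M11.
Import GRing.Theory Num.Theory.
Local Open Scope ring_scope.

Section L.
Variable n : nat.
Implicit Types (Q W X Y S : {set 'I_n}).

Lemma lab_total Q S : #|Q| = 4%N -> Sdom Q S -> \sum_i lab Q S i = 0.
Proof.
move=> hQ /andP [sSQ hS].
have -> : \sum_i lab Q S i = \sum_(i in [set: 'I_n]) lab Q S i by apply: eq_bigl => i; rewrite inE.
rewrite lab_sum setTI (setIidPr sSQ) !Z2_card hQ /=.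
case/orP: hS => /eqP ->; by rewrite ?cards0.
Qed.

Lemma fp_lab (T : {set {set {set 'I_n}}}) (a : params n) Q W S :
  (forall e, a e gG = a e gT) -> #|Q| = 4%N -> W \subset Q -> #|W| = 2%N -> Sdom Q S ->
  (forall e, e \in T -> #|side e :&: Q| = 2%N -> side e :&: Q \in [set W; Q :\: W]) ->
  fourier_param T a (lab Q S) = \prod_(e in T) Fe a Q e ((S == set0) || (S \in [set W; Q :\: W])).
Proof.
move=> hGT hQ sWQ hW hS hT.
rewrite /fourier_param lab_total // eqxx.
by apply: eq_bigr => e eT; apply: edge_val => //; apply: hT.
Qed.

Definition pairs Q : {set {set 'I_n}} := [set S : {set 'I_n} | S \subset Q & #|S| == 2%N].
Definition cS (s3 : {set {set 'I_n}}) S : CC := if S \in s3 then 1 else -1.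
Definition Lval Q s3 (v : vec n) : CC :=
  \sum_(S in pairs Q) cS s3 S * (Defs.coord v (lab Q S) - Defs.coord v (lab Q set0)).

Lemma sum_cS (A B : {set {set 'I_n}}) : \sum_(S in A) cS B S = #|A :&: B|%:R - #|A :\: B|%:R.
Proof.
rewrite (big_setID B) /=.
rewrite (eq_bigr (fun _ => 1)); last by move=> S; rewrite inE /cS => /andP [_ ->].
rewrite [X in _ + X](eq_bigr (fun _ => -1)); last by move=> S; rewrite inE /cS => /andP [/negbTE -> _].
by rewrite !sumr_const mulNrn.
Qed.

Lemma card_pairs Q : #|Q| = 4%N -> #|pairs Q| = 6%N.
Proof. by move=> hQ; rewrite /pairs cards_draws hQ. Qed.

Lemma sigma_sub Q W : W \subset Q -> #|Q| = 4%N -> #|W| = 2%N -> [set W; Q :\: W] \subset pairs Q.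
Proof.
move=> sWQ hQ hW; apply/subsetP => S; rewrite !inE => /orP [] /eqP ->.
- by rewrite sWQ hW eqxx.
- by rewrite subsetDl cardQD // hQ hW.
Qed.

Lemma card_sigma Q W : W \subset Q -> #|W| = 2%N -> #|[set W; Q :\: W]| = 2%N.
Proof.
move=> sWQ hW; rewrite cards2.
suff -> : (W != Q :\: W) by [].
apply/negP => /eqP h.
have : W \subset W :&: (Q :\: W) by rewrite -h setIid.
have -> : W :&: (Q :\: W) = set0 by apply/setP=> i; rewrite !inE; case: (i \in W); rewrite ?andbF.
by rewrite subset0 -cards_eq0 hW.
Qed.
End L.

End M11.
Import M11.

Module M12.
Import GRing.Theory Num.Theory.
Local Open Scope ring_scope.

Section L2.
Variable n : nat.
Implicit Types (Q W X Y S : {set 'I_n}).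

Lemma sigma_disj Q W W3 : W \subset Q -> W3 \subset Q ->
  [set W; Q :\: W] != [set W3; Q :\: W3] -> [set W; Q :\: W] :&: [set W3; Q :\: W3] = set0.
Proof.
move=> sWQ sW3Q hne; apply/setP => S; rewrite inE [in RHS]inE.
apply/negbTE/negP => /andP [h1 h2].
by rewrite -(sigma_eq sWQ h1) (sigma_eq sW3Q h2) eqxx in hne.
Qed.

Lemma Lval_tree (T : {set {set {set 'I_n}}}) (a : params n) Q W W3 (v : vec n) :
  (forall e, a e gG = a e gT) -> #|Q| = 4%N -> W \subset Q -> #|W| = 2%N ->
  W3 \subset Q -> #|W3| = 2%N ->
  (forall e, e \in T -> #|side e :&: Q| = 2%N -> side e :&: Q \in [set W; Q :\: W]) ->
  (forall g, Defs.coord v g = fourier_param T a g) ->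
  Lval Q [set W3; Q :\: W3] v =
  (if [set W; Q :\: W] == [set W3; Q :\: W3] then 4%:R else 0) *
    (\prod_(e in T) Fe a Q e true - \prod_(e in T) Fe a Q e false).
Proof.
move=> hGT hQ sWQ hW sW3Q hW3 hT hv.
set s := [set W; Q :\: W]; set s3 := [set W3; Q :\: W3].
set al := \prod_(e in T) Fe a Q e true; set be := \prod_(e in T) Fe a Q e false.
have sd0 : Sdom Q set0 by rewrite /Sdom sub0set eqxx.
have e0 : Defs.coord v (lab Q set0) = al by rewrite hv (fp_lab hGT hQ sWQ hW sd0 hT) eqxx.
rewrite /Lval.
rewrite (eq_bigr (fun S => cS s3 S * ((if S \in s then al else be) - al))); last first.
  move=> S; rewrite inE => /andP [sSQ hS].
  have sdS : Sdom Q S by rewrite /Sdom sSQ hS orbT.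
  have nS0 : (S == set0) = false.
    by apply/negbTE; apply: contraTneq hS => ->; rewrite cards0.
  rewrite e0 hv (fp_lab hGT hQ sWQ hW sdS hT) nS0 /= -/s; by case: (S \in s); rewrite /al /be.
rewrite (big_setID s) /=.
rewrite big1 ?add0r; last by move=> S; rewrite inE => /andP [_ ->]; rewrite subrr mulr0.
rewrite (eq_bigr (fun S => (be - al) * cS s3 S)); last first.
  by move=> S; rewrite inE => /andP [/negbTE -> _]; rewrite mulrC.
rewrite -mulr_sumr sum_cS.
have sP := sigma_sub sWQ hQ hW.
have sP3 := sigma_sub sW3Q hQ hW3.
have hs := card_sigma sWQ hW.
have hs3 := card_sigma sW3Q hW3.
have hPs : #|pairs Q :\: s| = 4%N by rewrite cardsD (setIidPr sP) card_pairs // hs.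
case: (boolP (s == s3)) => [/eqP es|nes].
  rewrite -es.
  have -> : (pairs Q :\: s) :&: s = set0.
    by apply/setP=> S; rewrite in_setI in_setD in_set0; case: (S \in s); rewrite ?andbF.
  have -> : (pairs Q :\: s) :\: s = pairs Q :\: s.
    by apply/setP=> S; rewrite !in_setD; case: (S \in s).
  rewrite cards0 hPs; ring.
have dj := sigma_disj sWQ sW3Q nes.
have e1 : (pairs Q :\: s) :&: s3 = s3.
  apply/setP=> S; rewrite in_setI; apply/idP/idP => [/andP [_ ->] //|h].
  rewrite h andbT in_setD (subsetP sP3 _ h) andbT.
  by apply/negP => hs'; move/setP: dj => /(_ S); rewrite in_setI hs' h in_set0.
have e2 : #|(pairs Q :\: s) :\: s3| = 2%N.
  move: (cardsID s3 (pairs Q :\: s)); by rewrite e1 hs3 hPs => h; apply/eqP; rewrite -(eqn_add2l 2) h.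
rewrite e1 e2 hs3; ring.
Qed.
End L2.

End M12.
Import M12.

Module M13.
Import GRing.Theory Num.Theory.

Section TT.
Variable n : nat.
Implicit Types (Q W X Y S : {set 'I_n}).

Lemma side_in (e : {set {set 'I_n}}) : is_split e -> side e \in e.
Proof.
move=> [A0 [_ _ ee]]; rewrite /side; case: pickP => [A HA|H] //=.
by move: (H A0); rewrite ee set21.
Qed.

Lemma QD_inter Q A : Q :\: A = Q :\: (A :&: Q).
Proof. by apply/setP=> i; rewrite !inE; case: (i \in Q); case: (i \in A). Qed.

Lemma tree_type (T : {set {set {set 'I_n}}}) Q : binary_tree T -> #|Q| = 4%N ->
  exists W, [/\ W \subset Q, #|W| = 2%N, tree_restrict T Q = Triv Q :|: [set [set W; Q :\: W]],
    (forall e, e \in T -> #|side e :&: Q| = 2%N -> side e :&: Q \in [set W; Q :\: W]) &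
    (exists2 e, e \in T & #|side e :&: Q| = 2%N)].
Proof.
move=> bT hQ.
have [W [sWQ hW hTR]] := tree_quartet bT hQ.
have Hs : forall e, e \in T -> is_split e by case: bT.
exists W; split => //.
- move=> e eT h2.
  set A := side e.
  have Ae : A \in e := side_in (Hs e eT).
  have hQA : #|Q :\: A| = 2%N by rewrite QD_inter cardQD ?subsetIr // hQ h2.
  have : [set A :&: Q; Q :\: A] \in tree_restrict T Q.
    apply/imsetP; exists A => //; rewrite inE; apply/andP; split.
      by apply/bigcupP; exists e.
    by rewrite -!card_gt0 h2 hQA.
  rewrite hTR in_setU => /orP [/imsetP [q qQ eq]|].
  + exfalso; case: (set2_eq eq) => [[h1 _]|[h1 _]]; move: h2; rewrite -/A h1.
    * by rewrite cards1.
    * have := cardsD1 q Q; rewrite qQ hQ; lia.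
  + rewrite inE => /eqP <-; exact: set21.
- have : [set W; Q :\: W] \in tree_restrict T Q by rewrite hTR in_setU set11 orbT.
  case/imsetP => A; rewrite inE => /andP [/bigcupP [e eT Ae] _] eS.
  exists e => //.
  have ee := is_split_any (Hs e eT) Ae.
  have se : side e \in e := side_in (Hs e eT).
  have hin : side e :&: Q \in [set W; Q :\: W].
    rewrite eS; move: se; rewrite ee !inE => /orP [] /eqP ->; first by rewrite eqxx.
    by rewrite setDE setIC eqxx orbT.
  exact: (card_in2 hQ sWQ hW hin).
Qed.
End TT.

End M13.
Import M13.

Module M14.
Import GRing.Theory Num.Theory.
Local Open Scope ring_scope.

Section P.
Variable n : nat.
Implicit Types (Q W X Y S : {set 'I_n}).

Definition Lpoly Q (s3 : {set {set 'I_n}}) : {mpoly CC[ncoord n]} :=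
  \sum_(S in pairs Q) cS s3 S *: ('X_(enum_rank (lab Q S)) - 'X_(enum_rank (lab Q set0))).

Lemma Lpoly_eval Q s3 (v : vec n) : (Lpoly Q s3).@[v] = Lval Q s3 v.
Proof.
rewrite /Lpoly (big_morph (meval v) (mevalD v) (meval0 v)).
apply: eq_bigr => S _.
by rewrite mevalZ mevalB !mevalXU.
Qed.

Lemma Lpoly_homog Q s3 : Lpoly Q s3 \is 1.-homog.
Proof.
apply: rpred_sum => S _; apply: rpredZ; apply: rpredB; rewrite dhomogX; apply/eqP; exact: mdeg1.
Qed.
End P.

End M14.
Import M14.

Module M15.
Import GRing.Theory Num.Theory.
Local Open Scope ring_scope.

Section F.
Variable n : nat.
Implicit Types (Q W X Y S : {set 'I_n}).

Lemma constr_GT m (a : params n) : model_constraint m a -> forall e, a e gG = a e gT.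
Proof. by case: m => /= h e; [case: (h e)|apply: h]. Qed.

Lemma Lval_lin Q s3 (s x y : vec n) (al be : CC) : (forall i, s i = al * x i + be * y i) ->
  Lval Q s3 s = al * Lval Q s3 x + be * Lval Q s3 y.
Proof.
move=> hs; rewrite /Lval !mulr_sumr -big_split; apply: eq_bigr => S _.
rewrite /Defs.coord !hs /=; ring.
Qed.

Lemma vanish m (T : {set {set {set 'I_n}}}) Q W W3 (x : vec n) :
  #|Q| = 4%N -> W \subset Q -> #|W| = 2%N -> W3 \subset Q -> #|W3| = 2%N ->
  (forall e, e \in T -> #|side e :&: Q| = 2%N -> side e :&: Q \in [set W; Q :\: W]) ->
  [set W; Q :\: W] != [set W3; Q :\: W3] ->
  model_variety m T x -> Lval Q [set W3; Q :\: W3] x = 0.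
Proof.
move=> hQ sWQ hW sW3Q hW3 hT ne [_ Hx].
rewrite -Lpoly_eval; apply: (Hx 1%N _ (Lpoly_homog _ _)) => s [_ [a [ha hs]]].
rewrite Lpoly_eval (Lval_tree (constr_GT ha) hQ sWQ hW sW3Q hW3 hT hs).
by rewrite (negbTE ne) mul0r.
Qed.
End F.


End M15.
Import M15.

Import GRing.Theory Num.Theory.
Local Open Scope ring_scope.

Theorem proposition5 (m : model) (n : nat) (T1 T2 T3 : {set {set {set 'I_n}}}) :
  binary_tree T1 -> binary_tree T2 -> binary_tree T3 ->
  (exists Q : {set 'I_n}, [/\ #|Q| = 4%N,
       tree_restrict T3 Q != tree_restrict T1 Q & tree_restrict T3 Q != tree_restrict T2 Q]) ->
  ~ (forall z, model_variety m T3 z -> join (model_variety m T1) (model_variety m T2) z).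
Proof.
move=> b1 b2 b3 [Q [hQ n1 n2]] H.
have [W1 [s1Q h1 tr1 hT1 _]] := tree_type b1 hQ.
have [W2 [s2Q h2 tr2 hT2 _]] := tree_type b2 hQ.
have [W3 [s3Q h3 tr3 hT3 [e0 e0T he0]]] := tree_type b3 hQ.
set s3 := [set W3; Q :\: W3].
have ne1 : [set W1; Q :\: W1] != s3 by apply: contra n1 => /eqP e; rewrite tr3 tr1 e.
have ne2 : [set W2; Q :\: W2] != s3 by apply: contra n2 => /eqP e; rewrite tr3 tr2 e.
pose a : params n := fun e h => if (e == e0) && (h == 0) then 2 else 1.
have ha : model_constraint m a by clear H; case: m => //= e; rewrite /a //.
have hGT := constr_GT ha.
have Fo : forall e b, e \in T3 -> e != e0 -> Fe a Q e b = 1.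
  by move=> e b _ ne; rewrite /Fe /a (negbTE ne) /=; case: ifP => _ //; case: ifP.
have al2 : \prod_(e in T3) Fe a Q e true = 2.
  rewrite (bigD1 e0) //= big1 ?mulr1; last by move=> e /andP [eT ne]; apply: Fo.
  by rewrite /Fe he0 /= /a eqxx.
have be1 : \prod_(e in T3) Fe a Q e false = 1.
  rewrite (bigD1 e0) //= big1 ?mulr1; last by move=> e /andP [eT ne]; apply: Fo.
  by rewrite /Fe he0 /= /a eqxx.
pose z : vec n := fun i => fourier_param T3 a (enum_val i).
have hz : forall g, Defs.coord z g = fourier_param T3 a g by move=> g; rewrite /Defs.coord /z enum_rankK.
have Lz := Lval_tree hGT hQ s3Q h3 s3Q h3 hT3 hz.
rewrite eqxx al2 be1 in Lz.
have nz : nonzero z.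
  exists (enum_rank (lab Q set0)); rewrite -/(Defs.coord z _) hz.
  rewrite (fp_lab hGT hQ s3Q h3 _ hT3) ?eqxx ?al2 //; last by rewrite /Sdom sub0set eqxx.
  by rewrite pnatr_eq0.
have V3 : model_variety m T3 z.
  split => // d p hp hv; apply: hv; split => //; exists a; split => //.
have [_ Hj] := H z V3.
have hv : forall s, (fun z => nonzero z /\ exists (x y : vec n) (alpha beta : CC),
      [/\ model_variety m T1 x, model_variety m T2 y & forall i, z i = alpha * x i + beta * y i]) s ->
    (Lpoly Q s3).@[s] = 0.
  move=> s [_ [x [y [al [be [Vx Vy hs]]]]]].
  rewrite Lpoly_eval (Lval_lin Q s3 hs).
  rewrite (vanish hQ s1Q h1 s3Q h3 hT1 ne1 Vx) (vanish hQ s2Q h2 s3Q h3 hT2 ne2 Vy).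
  by rewrite !mulr0 addr0.
have := Hj 1%N (Lpoly Q s3) (Lpoly_homog _ _) hv.
rewrite Lpoly_eval Lz.
have -> : (4%:R * (2 - 1) : CC) = 4%:R by ring.
by move/eqP; rewrite pnatr_eq0.
Qed.
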